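(* Let $\Lambda\subset\mathbb{C}$ be a lattice. Let $\mathcal{V}\subset\mathbb{R}^2$ be a non-empty subset of the form $\mathcal{V}=V(\mathbb{R})$ for some algebraic subvariety $V\subset\mathbb{A}^2_\mathbb{R}$, such that $\mathcal{V}$ cannot be written as $V_1(\mathbb{R})\cup V_2(\mathbb{R})$ with $V_1,V_2\subset\mathbb{A}^2_\mathbb{R}$ algebraic subvarieties and both inclusions $V_i(\mathbb{R})\subset\mathcal{V}$ proper. If $f(\mathcal{V})$ is contained in a bialgebraic curve for $\wp_{\Lambda\times\overline{\Lambda}}$, where $f(v,w)=(v+iw,v-iw)$, then $\mathcal{V}$ is weakly bialgebraic for $\mathcal{P}_\Lambda$.
   Context: Identify $\mathbb{R}^2$ with $\mathbb{C}$ via $(x,y)\mapsto x+iy$, and $\mathbb{R}^2\subset\mathbb{C}^2$. For a lattice $\Lambda\subset\mathbb{C}$ let $\wp_\Lambda:\mathbb{C}\to\mathbb{P}^1(\mathbb{C})$ be its Weierstrass $\wp$-function and $\mathcal{P}_\Lambda:\mathbb{R}^2\smallsetminus\Lambda\to\mathbb{R}^2$, $(x,y)\mapsto(\mathrm{Re}\,\wp_\Lambda(x+iy),\mathrm{Im}\,\wp_\Lambda(x+iy))$. A non-empty subset $\mathcal{V}\subsetneq\mathbb{R}^2$ is called weakly bialgebraic for $\mathcal{P}_\Lambda$ if (i) there exist algebraic subvarieties $V\subset\mathbb{A}^2_\mathbb{R}$ and $W\subsetneq\mathbb{A}^2_\mathbb{R}$ with $\mathcal{V}=V(\mathbb{R})$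 and $\mathcal{P}_\Lambda(\mathcal{V}\cap(\mathbb{R}^2\smallsetminus\Lambda))\subset W(\mathbb{R})$; and (ii) $\mathcal{V}$ cannot be written as $V_1(\mathbb{R})\cup V_2(\mathbb{R})$ with $V_i$ algebraic subvarieties and $V_i(\mathbb{R})\subsetneq\mathcal{V}$. Let $\wp_{\Lambda\times\overline{\Lambda}}=\wp_\Lambda\times\wp_{\overline{\Lambda}}:\mathbb{C}^2\to\mathbb{P}^1(\mathbb{C})^2$, with $\overline{\Lambda}$ the complex conjugate lattice. An irreducible algebraic curve $C\subset\mathbb{C}^2$ is bialgebraic for $\wp_{\Lambda\times\overline{\Lambda}}$ if $\wp_{\Lambda\times\overline{\Lambda}}(C)$ is not Zariski dense in $\mathbb{P}^1(\mathbb{C})^2$. *)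

(* Defs.v *)
From HB Require Import structures.
From mathcomp Require Import all_boot all_order all_algebra.
From mathcomp Require Import boolp classical_sets reals topology normedtype sequences.
From mathcomp Require Import complex.
Import Order.TTheory GRing.Theory Num.Theory.
Import numFieldTopology.Exports numFieldNormedType.Exports.

Set Implicit Arguments.
Unset Strict Implicit.
Unset Printing Implicit Defensive.

Local Open Scope classical_set_scope.
Local Open Scope ring_scope.

Definition Cc (R : realType) : numClosedFieldType := R[i].

Definition toC (R : realType) (p : R * R) : Cc R := (p.1 +i* p.2)%C.

(* (w1, w2) is an R-basis of C: the lattice is Lambda = Z w1 + Z w2. *)
Definition lattice_basis (R : realType) (w1 w2 : Cc R) : Prop :=
  forall a b : R, (a%:C)%C * w1 + (b%:C)%C * w2 = 0 -> a = 0 /\ b = 0.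

Definition in_lattice (R : realType) (w1 w2 : Cc R) (z : Cc R) : Prop :=
  exists m n : int, z = m%:~R * w1 + n%:~R * w2.

Definition wp_term (R : realType) (w1 w2 z : Cc R) (m n : int) : Cc R :=
  let w := m%:~R * w1 + n%:~R * w2 in
  if (m == 0) && (n == 0) then 0 else ((z - w) ^- 2 - w ^- 2).

Definition wp_partial (R : realType) (w1 w2 z : Cc R) (N : nat) : Cc R :=
  z ^- 2 + \sum_(i < (N + N).+1) \sum_(j < (N + N).+1)
              wp_term w1 w2 z (i%:Z - N%:Z) (j%:Z - N%:Z).

(* Weierstrass p-function C -> P^1(C); P^1(C) is modelled as option C with
   None = the point at infinity. *)
Definition wp (R : realType) (w1 w2 : Cc R) (z : Cc R) : option (Cc R) :=
  if `[< in_lattice w1 w2 z >] then None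
  else Some (lim (wp_partial w1 w2 z @ \oo)).

Definition calP (R : realType) (w1 w2 : Cc R) (p : R * R) : option (R * R) :=
  omap (fun z : Cc R => (complex.Re z, complex.Im z)) (wp w1 w2 (toC p)).

(* Real algebraic subsets of A^2_R.  A bivariate polynomial is an element
   of {poly {poly R}}: inner variable x, outer variable y.              *)

Definition eval2 (K : nzRingType) (P : {poly {poly K}}) (q : K * K) : K :=
  (P.[q.2%:P]).[q.1].

Definition zero_set (K : nzRingType) (ps : seq {poly {poly K}}) : set (K * K) :=
  [set q | forall P, P \in ps -> eval2 P q = 0].

Definition real_alg_set (R : realType) (S : set (R * R)) : Prop :=
  exists ps : seq {poly {poly R}}, S = zero_set ps.

(* S = W(R) for some algebraic subvariety W of A^2_R with W <> A^2_R
   (i.e. some defining polynomial is non-zero). *)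
Definition real_proper_alg_set (R : realType) (S : set (R * R)) : Prop :=
  exists ps : seq {poly {poly R}},
    (exists2 P, P \in ps & P != 0) /\ S = zero_set ps.

Definition real_alg_irreducible (R : realType) (S : set (R * R)) : Prop :=
  ~ (exists V1 V2 : set (R * R),
       [/\ real_alg_set V1, real_alg_set V2, V1 `<` S, V2 `<` S &
           S = V1 `|` V2]).

Definition weakly_bialgebraic (R : realType) (w1 w2 : Cc R)
    (S : set (R * R)) : Prop :=
  [/\ S !=set0, S `<` setT,
      real_alg_set S /\
      (exists W : set (R * R), real_proper_alg_set W /\
         (forall p q, S p -> calP w1 w2 p = Some q -> W q))
    & real_alg_irreducible S].

Definition poly2_const (K : nzRingType) (G : {poly {poly K}}) : Prop :=
  exists c : K, G = c%:P%:P.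

(* irreducible element of C[z1,z2] (non-zero, non-unit, no non-trivial
   factorisation); units of C[z1,z2] are the non-zero constants *)
Definition irreducible2 (K : nzRingType) (F : {poly {poly K}}) : Prop :=
  ~ poly2_const F /\
  forall G H : {poly {poly K}}, F = G * H -> poly2_const G \/ poly2_const H.

(* Zariski topology on P^1(C) x P^1(C).  Homogeneous coordinates of a point
   of P^1 = option C: Some a = [a:1], None = [1:0]. *)
Definition hcoord (K : nzRingType) (p : option K) : K * K :=
  match p with Some a => (a, 1) | None => (1, 0) end.

Definition bihom_eval (K : nzRingType) (d e : nat) (c : nat -> nat -> K)
    (q : option K * option K) : K :=
  let x := hcoord q.1 in let y := hcoord q.2 in
  \sum_(i < d.+1) \sum_(j < e.+1)
     c i j * x.1 ^+ i * x.2 ^+ (d - i) * y.1 ^+ j * y.2 ^+ (e - j).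

Definition zariski_closed_P1P1 (K : nzRingType)
    (Z : set (option K * option K)) : Prop :=
  exists (k : nat) (d e : 'I_k -> nat) (c : 'I_k -> nat -> nat -> K),
    Z = [set q | forall t, bihom_eval (d t) (e t) (c t) q = 0].

Definition zariski_dense_P1P1 (K : nzRingType)
    (T : set (option K * option K)) : Prop :=
  forall Z, zariski_closed_P1P1 Z -> T `<=` Z -> Z = setT.

Definition wp_prod (R : realType) (w1 w2 : Cc R) (z : Cc R * Cc R)
    : option (Cc R) * option (Cc R) :=
  (wp w1 w2 z.1, wp (w1^*)%R (w2^*)%R z.2).

Definition bialgebraic_curve (R : realType) (w1 w2 : Cc R)
    (F : {poly {poly Cc R}}) : Prop :=
  irreducible2 F /\ ~ zariski_dense_P1P1 (wp_prod w1 w2 @` zero_set [:: F]).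

Definition fmap2 (R : realType) (p : R * R) : Cc R * Cc R :=
  ((p.1 +i* p.2)%C, (p.1 -i* p.2)%C).

(* Main.v *)
Require Import Defs.
From HB Require Import structures.
From mathcomp Require Import all_boot all_order all_algebra.
From mathcomp Require Import boolp classical_sets reals topology normedtype sequences.
From mathcomp Require Import complex.
From mathcomp Require Import ring lra.
Import Order.TTheory GRing.Theory Num.Theory.
Import numFieldTopology.Exports numFieldNormedType.Exports.
Local Open Scope classical_set_scope.
Local Open Scope ring_scope.
Set Implicit Arguments.
Unset Strict Implicit.
Section P.
Variable K : comNzRingType.

Lemma eval2D (P Q : {poly {poly K}}) q : eval2 (P + Q) q = eval2 P q + eval2 Q q.
Proof. by rewrite /eval2 !hornerD. Qed.
Lemma eval2M (P Q : {poly {poly K}}) q : eval2 (P * Q) q = eval2 P q * eval2 Q q.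
Proof. by rewrite /eval2 !hornerM. Qed.
Lemma eval2N (P : {poly {poly K}}) q : eval2 (- P) q = - eval2 P q.
Proof. by rewrite /eval2 !hornerN. Qed.
Lemma eval2C (c : K) q : eval2 c%:P%:P q = c.
Proof. by rewrite /eval2 !hornerC. Qed.
Lemma eval2X1 q : eval2 ('X%:P : {poly {poly K}}) q = q.1.
Proof. by rewrite /eval2 hornerC hornerX. Qed.
Lemma eval2X2 q : eval2 ('X : {poly {poly K}}) q = q.2.
Proof. by rewrite /eval2 hornerX hornerC. Qed.
Lemma eval20 q : eval2 (0 : {poly {poly K}}) q = 0.
Proof. by rewrite /eval2 !horner0. Qed.

Lemma eval2_ind (T : Type) (Pr : (T -> K) -> Prop) (A B : T -> K) :
  (forall f g, Pr f -> f =1 g -> Pr g) ->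
  (forall f g, Pr f -> Pr g -> Pr (fun t => f t + g t)) ->
  (forall f g, Pr f -> Pr g -> Pr (fun t => f t * g t)) ->
  (forall c, Pr (fun _ => c)) -> Pr A -> Pr B ->
  forall H : {poly {poly K}}, Pr (fun t => eval2 H (A t, B t)).
Proof.
move=> ext add mul cst PA PB.
have inner : forall p : {poly K}, Pr (fun t => p.[A t]).
  elim/poly_ind => [|p c IH]; first by apply: ext (cst 0) _ => t; rewrite horner0.
  by apply: ext (add _ _ (mul _ _ IH PA) (cst c)) _ => t; rewrite hornerMXaddC.
elim/poly_ind => [|H p IH].
  by apply: ext (cst 0) _ => t; rewrite eval20.
apply: ext (add _ _ (mul _ _ IH PB) (inner p)) _ => t.
by rewrite /eval2 /= hornerMXaddC hornerD hornerM hornerC.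
Qed.

Definition polyfun2 (f : K * K -> K) := exists H : {poly {poly K}}, forall q, eval2 H q = f q.

Lemma pf_ext f g : polyfun2 f -> f =1 g -> polyfun2 g.
Proof. by move=> [H HH] fg; exists H => q; rewrite HH fg. Qed.
Lemma pf_add f g : polyfun2 f -> polyfun2 g -> polyfun2 (fun t => f t + g t).
Proof. by move=> [H HH] [G HG]; exists (H + G) => q; rewrite eval2D HH HG. Qed.
Lemma pf_mul f g : polyfun2 f -> polyfun2 g -> polyfun2 (fun t => f t * g t).
Proof. by move=> [H HH] [G HG]; exists (H * G) => q; rewrite eval2M HH HG. Qed.
Lemma pf_cst c : polyfun2 (fun _ => c).
Proof. by exists c%:P%:P => q; rewrite eval2C. Qed.
Lemma pf_fst : polyfun2 (fun q => q.1).
Proof. by exists 'X%:P => q; rewrite eval2X1. Qed.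
Lemma pf_snd : polyfun2 (fun q => q.2).
Proof. by exists 'X => q; rewrite eval2X2. Qed.
Lemma pf_exp f k : polyfun2 f -> polyfun2 (fun t => f t ^+ k).
Proof.
move=> pf; elim: k => [|k IH].
  by apply: pf_ext (pf_cst 1) _ => t; rewrite expr0.
by apply: pf_ext (pf_mul pf IH) _ => t; rewrite exprS.
Qed.
Lemma pf_sum n (f : 'I_n -> K * K -> K) :
  (forall i, polyfun2 (f i)) -> polyfun2 (fun q => \sum_(i < n) f i q).
Proof.
elim: n f => [|n IH] f hf.
  by apply: pf_ext (pf_cst 0) _ => t; rewrite big_ord0.
apply: pf_ext (pf_add (IH _ (fun i => hf (widen_ord (leqnSn n) i))) (hf ord_max)) _.
by move=> t; rewrite big_ord_recr.
Qed.
Lemma pf_comp h A B : polyfun2 h -> polyfun2 A -> polyfun2 B ->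
  polyfun2 (fun q => h (A q, B q)).
Proof.
move=> [H HH] pA pB.
apply: pf_ext (eval2_ind pf_ext pf_add pf_mul pf_cst pA pB H) _.
by move=> t; rewrite HH.
Qed.
End P.
Arguments pf_fst {K}.
Arguments pf_snd {K}.
Section U.
Variable K : numDomainType.
Lemma polyU (p : {poly K}) : (forall n : nat, p.[n%:R] = 0) -> p = 0.
Proof.
move=> h; apply/eqP; apply: contraT => p0.
have := max_poly_roots p0 (rs := [seq n%:R | n <- iota 0 (size p)]).
rewrite size_map size_iota ltnn; apply.
- by apply/allP => x /mapP [n _ ->]; apply/rootP.
- rewrite map_inj_uniq ?iota_uniq // => m n /eqP; rewrite eqr_nat => /eqP.
  done.
Qed.

Lemma PZ (F : {poly {poly K}}) :
  (forall n m : nat, eval2 F (n%:R, m%:R) = 0) -> F = 0.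
Proof.
move=> h.
have hy m : F.[(m%:R)%:P] = 0 by apply: polyU => n; exact: h n m.
have hc i : \poly_(j < size F) (F`_j)`_i = 0.
  apply: polyU => m; rewrite horner_poly.
  have := congr1 (fun p : {poly K} => p`_i) (hy m).
  rewrite /= coef0 horner_coef coef_sum.
  by move=> E; apply: (etrans _ E); apply: eq_bigr => j _; rewrite -polyC_exp coefMC.
apply/polyP => j; rewrite coef0; apply/polyP => i; rewrite coef0.
case: (ltnP j (size F)) => hj; last by rewrite (nth_default (0 : {poly K}) hj) coef0.
by have := congr1 (fun p : {poly K} => p`_j) (hc i); rewrite coef_poly hj coef0.
Qed.

Lemma V1 (g : nat -> K) n : (forall a, \sum_(i < n.+1) g i * a ^+ i = 0) ->
  forall i, (i <= n)%N -> g i = 0.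
Proof.
move=> h i hi.
have P0 : \poly_(i < n.+1) g i = 0 by apply: polyU => m; rewrite horner_poly h.
by have := congr1 (fun p : {poly K} => p`_i) P0; rewrite coef_poly ltnS hi coef0.
Qed.
End U.
Section L.
Variable R : realType.
Local Notation C := (Cc R).

Lemma cvg_conj (u : nat -> C) (l : C) :
  u @ \oo --> l -> (fun n => (u n)^*) @ \oo --> l^*.
Proof.
move=> /cvgrPdist_lt H; apply/cvgrPdist_lt => e e0.
by near do rewrite -rmorphB norm_conjC; apply: H.
Unshelve. all: end_near.
Qed.

Lemma lim_conj (u : nat -> C) :
  lim ((fun n => (u n)^*) @ \oo) = (lim (u @ \oo))^*.
Proof.
have [[l ul]|ncu] := pselect (exists l : C, (u @ \oo) --> l).
  rewrite (cvg_lim _ ul) //. by rewrite (cvg_lim _ (cvg_conj ul)).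
rewrite /lim /lim_in. rewrite getPN. rewrite getPN. by rewrite conjC0.
- by move=> l ul; apply: ncu; exists l.
- move=> l ul; apply: ncu; exists l^*.
  have := cvg_conj ul.
  by under eq_fun do rewrite conjCK.
Qed.
Lemma in_lattice_conj (w1 w2 z : C) :
  in_lattice w1 w2 z -> in_lattice (w1^*) (w2^*) (z^*).
Proof.
by case=> m [n ->]; exists m, n; rewrite rmorphD !rmorphM !rmorph_int.
Qed.

Lemma wp_partial_conj (w1 w2 z : C) N :
  (wp_partial w1 w2 z N)^* = wp_partial (w1^*) (w2^*) (z^*) N.
Proof.
rewrite /wp_partial rmorphD fmorphV rmorphXn rmorph_sum; congr (_ + _).
apply: eq_bigr => i _; rewrite rmorph_sum; apply: eq_bigr => j _.
rewrite /wp_term; case: ifP => _; first by rewrite rmorph0.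
by rewrite rmorphB !fmorphV !rmorphXn rmorphB rmorphD !rmorphM !rmorph_int.
Qed.

Lemma wp_conj (w1 w2 z : C) :
  wp (w1^*) (w2^*) (z^*) = omap (fun x => x^*) (wp w1 w2 z).
Proof.
rewrite /wp; case: (asboolP (in_lattice w1 w2 z)) => H.
  by rewrite asboolT //; apply: in_lattice_conj.
rewrite asboolF /=; last first.
  by move=> /in_lattice_conj; rewrite !conjCK.
congr Some; rewrite -lim_conj.
have -> : (fun n => (wp_partial w1 w2 z n)^*) = wp_partial (w1^*) (w2^*) (z^*).
  by apply: funext => n; rewrite wp_partial_conj.
by [].
Qed.
End L.
Section M.
Variable R : realType.
Local Notation C := (Cc R).
Local Open Scope complex_scope.

Lemma cplxP (x y : R) : x%:C + 'i%C * y%:C = (x +i* y)%C :> C.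
Proof. by rewrite [RHS]complexE. Qed.
Lemma cplxM (x y : R) : x%:C - 'i%C * y%:C = (x -i* y)%C :> C.
Proof. by rewrite [RHS]complexE /= rmorphN mulrN. Qed.

Lemma KLf (h : C * C -> C) : polyfun2 h ->
  (forall x y : R, h ((x +i* y)%C, (x -i* y)%C) = 0) -> forall a b, h (a, b) = 0.
Proof.
move=> ph hr a b.
pose A := fun q : C * C => q.1 + 'i%C * q.2.
pose B := fun q : C * C => q.1 - 'i%C * q.2.
have pA : polyfun2 A := pf_add pf_fst (pf_mul (pf_cst _) pf_snd).
have pB : polyfun2 B.
  apply: pf_ext (pf_add pf_fst (pf_mul (pf_cst (- 'i%C)) pf_snd)) _ => q.
  by rewrite /B mulNr.
have [G hG] := pf_comp ph pA pB.
have G0 : G = 0.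
  apply: PZ => n m; rewrite hG /A /B /=.
  rewrite -!(rmorph_nat (real_complex R)) cplxP cplxM; exact: hr.
have := hG (((a + b) / 2), - ('i%C * (a - b)) / 2); rewrite G0 eval20 /A /B /=.
have hk : 'i%C ^+ 2 = -1 :> C by rewrite sqr_i.
have h2 : (2 : C) != 0 by rewrite pnatr_eq0.
have -> : (a + b) / 2 + 'i%C * (- ('i%C * (a - b)) / 2) = a.
  transitivity ((a + b) / 2 - 'i%C ^+ 2 * (a - b) / 2); first by ring.
  by rewrite hk; field.
have -> : (a + b) / 2 - 'i%C * (- ('i%C * (a - b)) / 2) = b.
  transitivity ((a + b) / 2 + 'i%C ^+ 2 * (a - b) / 2); first by ring.
  by rewrite hk; field.
by [].
Qed.
Definition rpf (g : R * R -> C) := exists P Q : {poly {poly R}},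
  forall q, g q = (eval2 P q +i* eval2 Q q).

Lemma rpf_ext f g : rpf f -> f =1 g -> rpf g.
Proof. by move=> [P [Q H]] fg; exists P, Q => q; rewrite -fg H. Qed.
Lemma rpf_add f g : rpf f -> rpf g -> rpf (fun t => f t + g t).
Proof.
move=> [P [Q H]] [P' [Q' H']]; exists (P + P'), (Q + Q') => q.
by rewrite H H' !eval2D.
Qed.
Lemma rpf_mul f g : rpf f -> rpf g -> rpf (fun t => f t * g t).
Proof.
move=> [P [Q H]] [P' [Q' H']]; exists (P * P' - Q * Q'), (P * Q' + Q * P') => q.
by rewrite H H' !eval2D !eval2M eval2N !eval2M.
Qed.
Lemma rpf_cst c : rpf (fun _ => c).
Proof. by case: c => a b; exists a%:P%:P, b%:P%:P => q; rewrite !eval2C. Qed.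
Lemma rpf_A : rpf (fun q => (q.1 +i* q.2)).
Proof. by exists 'X%:P, 'X => q; rewrite eval2X1 eval2X2. Qed.
Lemma rpf_B : rpf (fun q => (q.1 -i* q.2)).
Proof. by exists 'X%:P, (- 'X) => q; rewrite eval2X1 eval2N eval2X2. Qed.
Lemma rpf_comp (h : C * C -> C) : polyfun2 h ->
  rpf (fun q => h ((q.1 +i* q.2), (q.1 -i* q.2))).
Proof.
move=> [H HH].
apply: rpf_ext (eval2_ind rpf_ext rpf_add rpf_mul rpf_cst rpf_A rpf_B H) _.
by move=> t; rewrite HH.
Qed.
End M.

Theorem lemma2p3p4 (R : realType) (w1 w2 : Cc R) (S : set (R * R)) :
  lattice_basis w1 w2 ->
  S !=set0 ->
  real_alg_set S ->
  real_alg_irreducible S ->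
  (exists F : {poly {poly Cc R}},
      bialgebraic_curve w1 w2 F /\ (@fmap2 R) @` S `<=` zero_set [:: F]) ->
  weakly_bialgebraic w1 w2 S.
Proof.
move=> hL hne hS hirr [F [[[Fnc _] Fnd] hsub]].
have FS : forall p, S p -> eval2 F (fmap2 p) = 0.
  move=> p Sp; apply: (hsub (fmap2 p)); first by exists p.
  exact: mem_head.
have Sprop : S `<` setT.
  split => // hT; apply: Fnc; exists 0; rewrite !polyC0.
  apply: PZ => n m; apply: (KLf (h := eval2 F)); first by exists F.
  by move=> x y; apply: (FS (x, y)); apply: hT.
have [Z [[k [d [e [c hZ]]]] [Zsub ZT]]] : exists Z, zariski_closed_P1P1 Z /\
    (wp_prod w1 w2 @` zero_set [:: F] `<=` Z) /\ Z <> setT.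
  apply: contrapT => hN; apply: Fnd => Z cZ sZ; apply: contrapT => nZ.
  by apply: hN; exists Z.
subst Z.
have [q0 [t0 hq0]] : exists q0 t0, bihom_eval (d t0) (e t0) (c t0) q0 <> 0.
  apply: contrapT => hN; apply: ZT; apply/seteqP; split => // q _ t.
  by apply: contrapT => nz; apply: hN; exists q, t.
pose h := fun q : Cc R * Cc R => bihom_eval (d t0) (e t0) (c t0) (Some q.1, Some q.2).
have ph : polyfun2 h.
  apply: (pf_ext (f := fun q : Cc R * Cc R => \sum_(i < (d t0).+1) \sum_(j < (e t0).+1)
     c t0 i j * q.1 ^+ i * 1 ^+ (d t0 - i) * q.2 ^+ j * 1 ^+ (e t0 - j))); last by [].
  apply: pf_sum => i; apply: pf_sum => j.
  exact: (pf_mul (pf_mul (pf_mul (pf_mul (pf_cst _) (pf_exp _ pf_fst)) (pf_cst _))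
            (pf_exp _ pf_snd)) (pf_cst _)).
have [P [Q hPQ]] := rpf_comp ph.
have PQ0 : P != 0 \/ Q != 0.
  apply: contrapT => hN.
  have P0 : P = 0 by apply: contrapT => nP; apply: hN; left; apply/eqP.
  have Q0 : Q = 0 by apply: contrapT => nP; apply: hN; right; apply/eqP.
  have hz : forall a b, h (a, b) = 0.
    move=> a b; apply: (KLf ph) => x y; have := hPQ (x, y); rewrite /= P0 Q0 !eval20 => ->.
    by [].
  have hc : forall i j, (i <= d t0)%N -> (j <= e t0)%N -> c t0 i j = 0.
    move=> i j hi hj.
    have hi' : forall b, \sum_(j < (e t0).+1) c t0 i j * b ^+ j = 0.
      move=> b; apply: (V1 (g := fun i => \sum_(j < (e t0).+1) c t0 i j * b ^+ j)) hi => a.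
      rewrite -[RHS](hz a b) /h /bihom_eval /=.
            apply: eq_bigr => i' _; rewrite mulr_suml; apply: eq_bigr => j' _.
      by rewrite !expr1n !mulr1 mulrAC.
    exact: (V1 (g := fun j => c t0 i j) hi' hj).
  apply: hq0; rewrite /bihom_eval; apply: big1 => i _; apply: big1 => j _.
  by rewrite hc ?mul0r // -ltnS.
split => //; split => //.
exists (zero_set [:: P; Q]); split.
  exists [:: P; Q]; split => //.
  by case: PQ0 => [nP|nQ]; [exists P | exists Q] => //; rewrite !inE eqxx ?orbT.
move=> p q Sp; rewrite /calP.
case E: (wp w1 w2 (toC p)) => [z0|] //= [<-].
have Zp : forall t, bihom_eval (d t) (e t) (c t) (wp_prod w1 w2 (fmap2 p)) = 0.
  by apply: Zsub; exists (fmap2 p) => //; apply: hsub; exists p.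
have Wp : wp_prod w1 w2 (fmap2 p) = (Some z0, Some (z0^*)%R).
  rewrite /wp_prod.
  have -> : (fmap2 p).2 = ((toC p)^*)%R by [].
  by rewrite wp_conj E.
have := Zp t0; rewrite Wp => hz0.
have := hPQ (complex.Re z0, complex.Im z0); rewrite /=.
have -> : (complex.Re z0 +i* complex.Im z0)%C = z0 by case: (z0) {E Wp hz0}.
have -> : (complex.Re z0 -i* complex.Im z0)%C = (z0^*)%R by case: (z0) {E Wp hz0}.
rewrite /h /= hz0 => /esym /eqP; rewrite eq_complex /= => /andP [/eqP P0 /eqP Q0].
by move=> P'; rewrite !inE => /orP [/eqP -> | /eqP ->].
Qed.
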